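(* Let $\alpha > 1$, $\delta \in [0,1)$, $p, q \in [0,1]$, $P = \mathrm{Ber}(p)$, $Q = \mathrm{Ber}(q)$. Then $$D^\delta_\alpha(P\|Q) = \begin{cases} D_\alpha\!\left(\mathrm{Ber}\!\left(\tfrac{p}{1-\delta}\right) \,\Big\|\, \mathrm{Ber}\!\left(\tfrac{q-\delta}{1-\delta}\right)\right) & \text{if } p < q - \delta,\\[4pt] D_\alpha\!\left(\mathrm{Ber}\!\left(\tfrac{p-\delta}{1-\delta}\right) \,\Big\|\, \mathrm{Ber}\!\left(\tfrac{q}{1-\delta}\right)\right) & \text{if } p > q + \delta,\\[4pt] 0 & \text{if } |p - q| \le \delta.\end{cases}$$ Moreover, for fixed $p$, $q \mapsto D^\delta_\alpha(P\|Q)$ is non-increasing on $[0,p]$ and non-decreasing on $[p,1]$; and for fixed $q$, $p \mapsto D^\delta_\alpha(P\|Q)$ is non-increasing on $[0,q]$ and non-decreasing on $[q,1]$.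
   Context: $\mathrm{Ber}(p)$ is the Bernoulli distribution with success probability $p$. For distributions $P,Q$ on a countable set and $\alpha>1$, $D_\alpha(P\|Q) = \frac{1}{\alpha-1}\log\sum_x P(x)^\alpha Q(x)^{1-\alpha}$ (equal to $\infty$ if $P$ is not absolutely continuous w.r.t. $Q$). The approximate Rényi divergence is $D^\delta_\alpha(P\|Q) = \inf\{D_\alpha(P'\|Q') : P = (1-\delta)P' + \delta P'',\ Q = (1-\delta)Q' + \delta Q''\}$, where the infimum is over probability distributions $P', P'', Q', Q''$ on the same space. *)

(* Defs.v *)
From HB Require Import structures.
From mathcomp Require Import all_boot all_order all_algebra.
From mathcomp Require Import all_classical all_reals all_analysis.
Set Implicit Arguments. Unset Strict Implicit. Unset Printing Implicit Defensive.
Import Order.TTheory GRing.Theory Num.Theory.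
Local Open Scope ring_scope.
Local Open Scope classical_set_scope.

Definition is_dist (R : realType) (P : bool -> R) : Prop :=
  (forall b, 0 <= P b) /\ P true + P false = 1.

Definition ber (R : realType) (p : R) : bool -> R :=
  fun b => if b then p else 1 - p.

(* Renyi divergence of order alpha on bool (natural log); +oo if P is not
   absolutely continuous w.r.t. Q.  Terms with P b = 0 vanish since
   0 `^ alpha = 0 for alpha > 1. *)
Definition renyi (R : realType) (alpha : R) (P Q : bool -> R) : \bar R :=
  if [exists b, (0 < P b) && (Q b == 0)] then +oo%E
  else ((alpha - 1)^-1 * ln (\sum_(b : bool) P b `^ alpha * Q b `^ (1 - alpha)))%:E.

Definition renyi_approx (R : realType) (alpha delta : R) (P Q : bool -> R) : \bar R :=
  ereal_inf [set d | exists P1 P2 Q1 Q2 : bool -> R,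
    [/\ is_dist P1, is_dist P2, is_dist Q1 & is_dist Q2] /\
    (forall b, P b = (1 - delta) * P1 b + delta * P2 b) /\
    (forall b, Q b = (1 - delta) * Q1 b + delta * Q2 b) /\
    d = renyi alpha P1 Q1].

(* Main.v *)
Require Import Defs.
From HB Require Import structures.
From mathcomp Require Import all_boot all_order all_algebra.
From mathcomp Require Import all_classical all_reals all_analysis.
From mathcomp Require Import ring lra.
Import Order.TTheory GRing.Theory Num.Theory.
Local Open Scope ring_scope.

Set Implicit Arguments. Unset Strict Implicit.
Section S.
Variable R : realType.
Implicit Types x y t a b s : R.

Lemma bern_neg (be t : R) : be <= 0 -> 0 < t -> 1 + be * (t - 1) <= t `^ be.
Proof.
move=> hb ht; rewrite /powR gt_eqF //.
apply: le_trans (expR_ge1Dx _).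
rewrite lerD2l.
have hl : ln t <= t - 1.
  have := @le_ln1Dx R (t - 1); rewrite (_ : 1 + (t - 1) = t); last by ring.
  by apply; lra.
rewrite -subr_ge0 -mulrBr; apply: mulr_le0 => //; lra.
Qed.

Lemma convex_neg (be l a b : R) : be <= 0 -> 0 <= l <= 1 -> 0 < a -> 0 < b ->
  (l * a + (1 - l) * b) `^ be <= l * a `^ be + (1 - l) * b `^ be.
Proof.
move=> hb /andP[l0 l1] ha hb'.
set s := l * a + (1 - l) * b.
have hs : 0 < s.
  rewrite /s; have [->|l0'] := eqVneq l 0; first by rewrite mul0r add0r subr0 mul1r.
  have lp : 0 < l by rewrite lt_def l0' l0.
  have h1 := mulr_gt0 lp ha.
  have h2 : 0 <= (1 - l) * b by rewrite mulr_ge0 // ?subr_ge0 // ltW.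
  lra.
have tang : forall c, 0 < c -> s `^ be + be * s `^ be * (c / s - 1) <= c `^ be.
  move=> c hc.
  have -> : c `^ be = s `^ be * (c / s) `^ be.
    by rewrite -powRM ?ltW ?divr_gt0 // mulrC divfK // gt_eqF.
  have := @bern_neg be _ hb (divr_gt0 hc hs).
  have hp : 0 <= s `^ be by apply: powR_ge0.
  move=> h; have := ler_wpM2l hp h; apply: le_trans.
  by rewrite le_eqVlt; apply/orP; left; apply/eqP; ring.
have ta := tang a ha; have tb := tang b hb'.
have e : l * (a / s - 1) + (1 - l) * (b / s - 1) = 0.
  have -> : l * (a / s - 1) + (1 - l) * (b / s - 1) = (l * a + (1 - l) * b) / s - 1 by ring.
  by rewrite -/s mulfV ?gt_eqF // subrr.
have l1' : 0 <= 1 - l by rewrite subr_ge0.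
have := lerD (ler_wpM2l l0 ta) (ler_wpM2l l1' tb).
set P := s `^ be; set Q := be * P.
move=> h; apply: le_trans h.
have -> : l * (P + Q * (a / s - 1)) + (1 - l) * (P + Q * (b / s - 1))
  = P + Q * (l * (a / s - 1) + (1 - l) * (b / s - 1)) by ring.
by rewrite e mulr0 addr0.
Qed.

Lemma convex_pos (al l a b : R) : 1 <= al -> 0 <= l <= 1 -> 0 <= a -> 0 <= b ->
  (l * a + (1 - l) * b) `^ al <= l * a `^ al + (1 - l) * b `^ al.
Proof.
move=> h1 /andP[l0 l1] ha hb.
have := @convex_powR R al h1 (Itv01 l0 l1) a b.
rewrite !inE /= !in_itv /= !andbT => /(_ ha hb).
by rewrite !convRE /=.
Qed.


Definition G (al x y : R) := x `^ al * y `^ (1 - al) + (1 - x) `^ al * (1 - y) `^ (1 - al).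
Definition bad (x y : R) : bool := ((0 < x) && (y == 0)) || ((0 < 1 - x) && (1 - y == 0)).

Lemma renyi_berE al x y : renyi al (ber x) (ber y) =
  if bad x y then +oo%E else ((al - 1)^-1 * ln (G al x y))%:E.
Proof.
rewrite /renyi big_bool /=.
have -> : [exists b, (0 < ber x b) && (ber y b == 0)] = bad x y.
  apply/existsP/idP.
    by case=> -[]; rewrite /bad /= => ->; rewrite ?orbT.
  by rewrite /bad => /orP[h|h]; [exists true | exists false].
by [].
Qed.

Lemma term_lb al x y : 1 < al -> 0 <= x -> 0 <= y -> (0 < x -> 0 < y) ->
  x + (1 - al) * (y - x) <= x `^ al * y `^ (1 - al).
Proof.
move=> h1 hx hy hxy.
have [->|x0] := eqVneq x 0.
  rewrite powR0 ?gt_eqF ?(lt_trans ltr01) // mul0r add0r subr0.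
  by rewrite mulr_le0_ge0 // subr_le0 ltW.
have xp : 0 < x by rewrite lt_def x0 hx.
have yp := hxy xp.
have -> : x `^ al = x * x `^ (al - 1) by rewrite mulr_powRB1 // (lt_trans ltr01).
have -> : y `^ (1 - al) = (y / x) `^ (1 - al) * x `^ (1 - al).
  by rewrite -powRM ?divr_ge0 // ?ltW // divfK // gt_eqF.
have e : x `^ (al - 1) * x `^ (1 - al) = 1.
  rewrite -powRD; last by apply/implyP => _; rewrite gt_eqF.
  by rewrite (_ : al - 1 + (1 - al) = 0) ?powRr0 //; ring.
have -> : x * x `^ (al - 1) * ((y / x) `^ (1 - al) * x `^ (1 - al))
   = x * (y / x) `^ (1 - al) * (x `^ (al - 1) * x `^ (1 - al)) by ring.
rewrite e mulr1.
have hb : 1 - al <= 0 by lra.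
have := bern_neg hb (divr_gt0 yp xp).
move=> /(ler_wpM2l (ltW xp)); apply: le_trans.
have -> : x * (1 + (1 - al) * (y / x - 1)) = x + (1 - al) * (x * (y / x) - x) by ring.
by rewrite (mulrC x (y / x)) divfK ?gt_eqF.
Qed.

Lemma G_ge1 al x y : 1 < al -> 0 <= x <= 1 -> 0 <= y <= 1 -> ~~ bad x y -> 1 <= G al x y.
Proof.
move=> h1 /andP[x0 x1] /andP[y0 y1]; rewrite /bad negb_or !negb_and.
move=> /andP[A B].
have c1 : 0 < x -> 0 < y.
  by move=> xp; move: A; rewrite xp /= => yn; rewrite lt_def yn y0.
have c2 : 0 < 1 - x -> 0 < 1 - y.
  by move=> xp; move: B; rewrite xp /= => yn; rewrite lt_def yn subr_ge0 y1.
have t1 := term_lb h1 x0 y0 c1.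
have xa : 0 <= 1 - x by rewrite subr_ge0.
have ya : 0 <= 1 - y by rewrite subr_ge0.
have t2 := term_lb h1 xa ya c2.
have e : x + (1 - al) * (y - x) + (1 - x + (1 - al) * (1 - y - (1 - x))) = 1 by ring.
rewrite /G; apply: le_trans (lerD t1 t2); by rewrite e.
Qed.

Lemma G_diag al x : 0 <= x <= 1 -> G al x x = 1.
Proof.
move=> /andP[x0 x1]; rewrite /G.
have pw : forall z : R, 0 <= z -> z `^ al * z `^ (1 - al) = z.
  move=> z z0; rewrite -powRD; last by apply/implyP; rewrite (_ : al + (1 - al) = 1) ?oner_eq0 //; ring.
  by rewrite (_ : al + (1 - al) = 1) ?powRr1 //; ring.
rewrite !pw //; [ring | lra].
Qed.

Lemma G_flip al x y : G al x y = G al (1 - x) (1 - y).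
Proof.
have e : forall z : R, 1 - (1 - z) = z by move=> z; ring.
by rewrite /G !e addrC.
Qed.

Lemma bad_flip x y : bad x y = bad (1 - x) (1 - y).
Proof.
have e : forall z : R, 1 - (1 - z) = z by move=> z; ring.
by rewrite /bad !e orbC.
Qed.

Lemma renyi_flip al x y : renyi al (ber x) (ber y) = renyi al (ber (1 - x)) (ber (1 - y)).
Proof. by rewrite !renyi_berE -bad_flip -G_flip. Qed.

Lemma renyi_ge0 al x y : 1 < al -> 0 <= x <= 1 -> 0 <= y <= 1 ->
  (0 <= renyi al (ber x) (ber y))%E.
Proof.
move=> h1 hx hy; rewrite renyi_berE; case: ifPn => hb //.
rewrite lee_fin; apply: mulr_ge0; first by rewrite invr_ge0 subr_ge0 ltW.
by apply: ln_ge0; exact: G_ge1.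
Qed.

Lemma renyi_diag al x : 0 <= x <= 1 -> renyi al (ber x) (ber x) = 0%E.
Proof.
move=> hx; rewrite renyi_berE.
have -> : bad x x = false.
  rewrite /bad; apply/negbTE; rewrite negb_or !negb_and.
  apply/andP; split.
    by have [->|xn] := eqVneq x 0; [rewrite ltxx | apply/orP; right].
  by have [->|xn] := eqVneq (1 - x) 0; [rewrite ltxx | apply/orP; right].
by rewrite G_diag // ln1 mulr0.
Qed.


Lemma termconv (al be l c u v : R) : 1 < al -> be <= 0 -> 0 <= l <= 1 -> 0 <= c ->
  (0 < c -> 0 < u /\ 0 < v) ->
  c `^ al * (l * u + (1 - l) * v) `^ be <= l * (c `^ al * u `^ be) + (1 - l) * (c `^ al * v `^ be).
Proof.
move=> h1 hb hl hc huv.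
have [->|cn] := eqVneq c 0.
  by rewrite powR0 ?gt_eqF ?(lt_trans ltr01) // !mul0r !mulr0 addr0.
have cp : 0 < c by rewrite lt_def cn hc.
have [up vp] := huv cp.
apply: le_trans (ler_wpM2l (powR_ge0 _ _) (convex_neg hb hl up vp)) _.
by rewrite le_eqVlt; apply/orP; left; apply/eqP; ring.
Qed.

Lemma termconv2 (al be l c u v : R) : 1 <= al -> 0 <= l <= 1 -> 0 <= u -> 0 <= v ->
  (l * u + (1 - l) * v) `^ al * c `^ be <= l * (u `^ al * c `^ be) + (1 - l) * (v `^ al * c `^ be).
Proof.
move=> h1 hl hu hv.
apply: le_trans (ler_wpM2r (powR_ge0 _ _) (convex_pos h1 hl hu hv)) _.
by rewrite le_eqVlt; apply/orP; left; apply/eqP; ring.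
Qed.

Lemma mix_le (A B l : R) : 0 <= l <= 1 -> 1 <= B -> A <= l * 1 + (1 - l) * B -> A <= B.
Proof.
move=> /andP[l0 l1] hB hA; apply: le_trans hA _.
have : l * (1 - B) <= 0 by apply: mulr_ge0_le0 => //; rewrite subr_le0.
move=> h.
have -> : l * 1 + (1 - l) * B = B + l * (1 - B) by ring.
by rewrite gerDl.
Qed.

Lemma nbad_pos x y : ~~ bad x y -> 0 <= y <= 1 ->
  (0 < x -> 0 < y) /\ (0 < 1 - x -> 0 < 1 - y).
Proof.
rewrite /bad negb_or !negb_and => /andP[A B] /andP[y0 y1]; split.
  by move=> xp; move: A; rewrite xp /= => yn; rewrite lt_def yn y0.
by move=> xp; move: B; rewrite xp /= => yn; rewrite lt_def yn subr_ge0 y1.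
Qed.

Lemma GM1 al x y1 y2 : 1 < al -> 0 <= x -> x <= y1 -> y1 <= y2 -> y2 <= 1 ->
  ~~ bad x y2 -> ~~ bad x y1 /\ G al x y1 <= G al x y2.
Proof.
move=> h1 x0 xy1 y12 y21 nb; split.
  apply/negP => /orP[/andP[xp /eqP y10]|/andP[xp /eqP y11]].
    by move: xy1; rewrite y10 leNgt xp.
  have y2e : 1 - y2 = 0 by lra.
  by move/negP: nb; apply; rewrite /bad y2e eqxx xp orbT.
have [e|ne] := eqVneq y1 y2; first by rewrite e.
have xy2 : x < y2 by rewrite (le_lt_trans xy1) // lt_def eq_sym ne y12.
have d0 : y2 - x != 0 by rewrite subr_eq0 gt_eqF.
set l := (y2 - y1) / (y2 - x).
have hl : 0 <= l <= 1.
  apply/andP; split; first by apply: divr_ge0; lra.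
  rewrite /l ler_pdivrMr; last by lra.
  rewrite mul1r; lra.
have e1 : y1 = l * x + (1 - l) * y2 by rewrite /l; field.
have e2 : 1 - y1 = l * (1 - x) + (1 - l) * (1 - y2) by rewrite /l; field.
have [c1 c2] := nbad_pos nb (ltac:(apply/andP; split => //; lra)).
have hb : 1 - al <= 0 by lra.
have t1 := @termconv al (1 - al) l x x y2 h1 hb hl x0
  (fun xp => conj xp (lt_le_trans xp (le_trans xy1 y12))).
have t2 := @termconv al (1 - al) l (1 - x) (1 - x) (1 - y2) h1 hb hl
  ltac:(lra) (fun xp => conj xp (c2 xp)).
rewrite -e1 in t1; rewrite -e2 in t2.
have x1 : x <= 1 by lra.
apply: (mix_le hl (G_ge1 h1 _ _ nb)); first by apply/andP; split.
  by apply/andP; split => //; lra.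
have gd : G al x x = 1 by apply: G_diag; apply/andP.
apply: (@le_trans _ _ (l * G al x x + (1 - l) * G al x y2)); last by rewrite gd.
rewrite /G; apply: le_trans (lerD t1 t2) _.
by rewrite le_eqVlt; apply/orP; left; apply/eqP; ring.
Qed.



Lemma GM2 al x1 x2 y : 1 < al -> 0 <= x2 -> x2 <= x1 -> x1 <= y -> y <= 1 ->
  ~~ bad x2 y -> ~~ bad x1 y /\ G al x1 y <= G al x2 y.
Proof.
move=> h1 x0 x21 x1y y1 nb; split.
  apply/negP => /orP[/andP[xp /eqP y0]|/andP[xp /eqP y11]].
    by move: x1y; rewrite y0 leNgt xp.
  have xp2 : 0 < 1 - x2 by lra.
  by move/negP: nb; apply; rewrite /bad y11 eqxx xp2 orbT.
have [e|ne] := eqVneq x1 x2; first by rewrite e.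
have xy2 : x2 < y by rewrite (lt_le_trans _ x1y) // lt_def ne x21.
have d0 : y - x2 != 0 by rewrite subr_eq0 gt_eqF.
set l := (x1 - x2) / (y - x2).
have hl : 0 <= l <= 1.
  apply/andP; split; first by apply: divr_ge0; lra.
  rewrite /l ler_pdivrMr; last by lra.
  rewrite mul1r; lra.
have e1 : x1 = l * y + (1 - l) * x2 by rewrite /l; field.
have e2 : 1 - x1 = l * (1 - y) + (1 - l) * (1 - x2) by rewrite /l; field.
have h1' : 1 <= al by lra.
have t1 := @termconv2 al (1 - al) l y y x2 h1' hl ltac:(lra) x0.
have t2 := @termconv2 al (1 - al) l (1 - y) (1 - y) (1 - x2) h1' hl ltac:(lra) ltac:(lra).
rewrite -e1 in t1; rewrite -e2 in t2.
apply: (mix_le hl (G_ge1 h1 _ _ nb)).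
- by apply/andP; split => //; lra.
- by apply/andP; split => //; lra.
have gd : G al y y = 1 by apply: G_diag; apply/andP; split => //; lra.
apply: (@le_trans _ _ (l * G al y y + (1 - l) * G al x2 y)); last by rewrite gd.
rewrite /G; apply: le_trans (lerD t1 t2) _.
by rewrite le_eqVlt; apply/orP; left; apply/eqP; ring.
Qed.

Lemma GM1' al x y1 y2 : 1 < al -> 0 <= y2 -> y2 <= y1 -> y1 <= x -> x <= 1 ->
  ~~ bad x y2 -> ~~ bad x y1 /\ G al x y1 <= G al x y2.
Proof.
move=> h1 y0 y21 y1x x1 nb.
rewrite bad_flip G_flip (G_flip al x y2).
apply: GM1 => //; try lra.
by rewrite -bad_flip.
Qed.

Lemma GM2' al x1 x2 y : 1 < al -> 0 <= y -> y <= x1 -> x1 <= x2 -> x2 <= 1 ->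
  ~~ bad x2 y -> ~~ bad x1 y /\ G al x1 y <= G al x2 y.
Proof.
move=> h1 y0 yx1 x12 x21 nb.
rewrite bad_flip G_flip (G_flip al x2 y).
apply: GM2 => //; try lra.
by rewrite -bad_flip.
Qed.

Lemma renyi_mono al x1 y1 x2 y2 : 1 < al -> 0 <= x2 <= 1 -> 0 <= y2 <= 1 ->
  (~~ bad x1 y1 -> ~~ bad x2 y2 /\ G al x2 y2 <= G al x1 y1) ->
  (renyi al (ber x2) (ber y2) <= renyi al (ber x1) (ber y1))%E.
Proof.
move=> h1 hx hy H; rewrite !renyi_berE.
have [b1|nb1] := boolP (bad x1 y1); first exact: leey.
have [nb2 le] := H nb1.
rewrite (negbTE nb2) lee_fin.
have g2 := G_ge1 h1 hx hy nb2.
apply: ler_wpM2l; first by rewrite invr_ge0 subr_ge0 ltW.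
rewrite ler_ln // posrE; lra.
Qed.


Lemma is_dist_ber x : 0 <= x <= 1 -> is_dist (ber x).
Proof.
move=> /andP[x0 x1]; split; last by rewrite /ber subrKC.
by case => /=; rewrite ?subr_ge0.
Qed.

Lemma dist_ber (P : bool -> R) : is_dist P -> P = ber (P true) /\ 0 <= P true <= 1.
Proof.
move=> [h0 h1]; split.
  apply: funext => -[] //=; rewrite -h1; ring.
have := h0 false; have := h0 true; lra.
Qed.

Lemma ra_lb (al d p q : R) (v : \bar R) :
  (forall p' p'' q' q'', 0 <= p' <= 1 -> 0 <= p'' <= 1 -> 0 <= q' <= 1 -> 0 <= q'' <= 1 ->
    p = (1 - d) * p' + d * p'' -> q = (1 - d) * q' + d * q'' ->
    (v <= renyi al (ber p') (ber q'))%E) ->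
  (v <= renyi_approx al d (ber p) (ber q))%E.
Proof.
move=> H; apply/ereal_infP => z /= [P1 [P2 [Q1 [Q2 [[d1 d2 d3 d4] [hP [hQ ->]]]]]]].
have [e1 b1] := dist_ber d1; have [e2 b2] := dist_ber d2.
have [e3 b3] := dist_ber d3; have [e4 b4] := dist_ber d4.
rewrite e1 e3; apply: (H (P1 true) (P2 true) (Q1 true) (Q2 true)) => //.
  exact: (hP true).
exact: (hQ true).
Qed.

Lemma ra_ub (al d p q p1 p2 q1 q2 : R) :
  0 <= p1 <= 1 -> 0 <= p2 <= 1 -> 0 <= q1 <= 1 -> 0 <= q2 <= 1 ->
  p = (1 - d) * p1 + d * p2 -> q = (1 - d) * q1 + d * q2 ->
  (renyi_approx al d (ber p) (ber q) <= renyi al (ber p1) (ber q1))%E.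
Proof.
move=> b1 b2 b3 b4 hp hq; apply: ge_ereal_inf.
exists (renyi al (ber p1) (ber q1)) => //.
exists (ber p1), (ber p2), (ber q1), (ber q2); split.
  by split; apply: is_dist_ber.
split; first by case => /=; rewrite ?hp //; ring.
split; first by case => /=; rewrite ?hq //; ring.
by [].
Qed.


Lemma RM1 al x y1 y2 : 1 < al -> 0 <= x -> x <= y1 -> y1 <= y2 -> y2 <= 1 ->
  (renyi al (ber x) (ber y1) <= renyi al (ber x) (ber y2))%E.
Proof.
move=> h1 x0 xy y12 y21; apply: renyi_mono => //.
- by apply/andP; split; lra.
- by apply/andP; split; lra.
by move=> nb; apply: GM1.
Qed.

Lemma RM2 al x1 x2 y : 1 < al -> 0 <= x2 -> x2 <= x1 -> x1 <= y -> y <= 1 ->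
  (renyi al (ber x1) (ber y) <= renyi al (ber x2) (ber y))%E.
Proof.
move=> h1 x0 x21 x1y y1; apply: renyi_mono => //.
- by apply/andP; split; lra.
- by apply/andP; split; lra.
by move=> nb; apply: GM2.
Qed.

Lemma RM1' al x y1 y2 : 1 < al -> 0 <= y2 -> y2 <= y1 -> y1 <= x -> x <= 1 ->
  (renyi al (ber x) (ber y1) <= renyi al (ber x) (ber y2))%E.
Proof.
move=> h1 y0 y21 y1x x1; apply: renyi_mono => //.
- by apply/andP; split; lra.
- by apply/andP; split; lra.
by move=> nb; apply: GM1'.
Qed.

Lemma RM2' al x1 x2 y : 1 < al -> 0 <= y -> y <= x1 -> x1 <= x2 -> x2 <= 1 ->
  (renyi al (ber x1) (ber y) <= renyi al (ber x2) (ber y))%E.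
Proof.
move=> h1 y0 yx1 x12 x21; apply: renyi_mono => //.
- by apply/andP; split; lra.
- by apply/andP; split; lra.
by move=> nb; apply: GM2'.
Qed.

Lemma div01 (a k : R) : 0 < k -> 0 <= a -> a <= k -> 0 <= a / k <= 1.
Proof.
move=> k0 a0 ak; apply/andP; split; first by rewrite divr_ge0 // ltW.
by rewrite ler_pdivrMr // mul1r.
Qed.

Lemma divle (a b k : R) : 0 < k -> a <= b -> a / k <= b / k.
Proof. by move=> k0 ab; rewrite ler_pM2r // invr_gt0. Qed.

Lemma ra_ge0 (al d p q : R) : 1 < al -> (0 <= renyi_approx al d (ber p) (ber q))%E.
Proof.
move=> h1; apply: ra_lb => p1 p2 q1 q2 b1 b2 b3 b4 _ _; exact: renyi_ge0.
Qed.

Lemma case1 (al d p q : R) : 1 < al -> 0 <= d -> d < 1 -> 0 <= p <= 1 -> 0 <= q <= 1 ->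
  p < q - d ->
  renyi_approx al d (ber p) (ber q) = renyi al (ber (p / (1 - d))) (ber ((q - d) / (1 - d))).
Proof.
move=> h1 d0 d1 /andP[p0 p1] /andP[q0 q1] pq.
have k0 : 0 < 1 - d by lra.
have kn : 1 - d != 0 by rewrite gt_eqF.
set ps := p / (1 - d); set qs := (q - d) / (1 - d).
have bps : 0 <= ps <= 1 by apply: div01 => //; lra.
have bqs : 0 <= qs <= 1 by apply: div01 => //; lra.
have psqs : ps <= qs by apply: divle => //; lra.
apply/eqP; rewrite eq_le; apply/andP; split.
  apply: (@ra_ub al d p q ps 0 qs 1) => //.
  - by rewrite lexx ler01.
  - by rewrite ler01 lexx.
  - by rewrite mulr0 addr0 mulrC divfK.
  - by rewrite mulr1 mulrC divfK // subrK.
apply: ra_lb => p1' p2' q1' q2' /andP[a0 a1] /andP[b0 b1] /andP[c0 c1] /andP[e0 e1] hp hq.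
have hp1 : p1' <= ps.
  rewrite /ps ler_pdivlMr // mulrC.
  have := mulr_ge0 d0 b0; lra.
have hq1 : qs <= q1'.
  rewrite /qs ler_pdivrMr // mulrC.
  have : d * q2' <= d by rewrite -{2}(mulr1 d) ler_wpM2l.
  lra.
apply: le_trans (@RM2 al ps p1' qs h1 a0 hp1 psqs _) _; first by case/andP: bqs.
apply: RM1 => //; lra.
Qed.

Lemma case2 (al d p q : R) : 1 < al -> 0 <= d -> d < 1 -> 0 <= p <= 1 -> 0 <= q <= 1 ->
  p > q + d ->
  renyi_approx al d (ber p) (ber q) = renyi al (ber ((p - d) / (1 - d))) (ber (q / (1 - d))).
Proof.
move=> h1 d0 d1 /andP[p0 p1] /andP[q0 q1] pq.
have k0 : 0 < 1 - d by lra.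
have kn : 1 - d != 0 by rewrite gt_eqF.
set ps := (p - d) / (1 - d); set qs := q / (1 - d).
have bps : 0 <= ps <= 1 by apply: div01 => //; lra.
have bqs : 0 <= qs <= 1 by apply: div01 => //; lra.
have psqs : qs <= ps by apply: divle => //; lra.
apply/eqP; rewrite eq_le; apply/andP; split.
  apply: (@ra_ub al d p q ps 1 qs 0) => //.
  - by rewrite ler01 lexx.
  - by rewrite lexx ler01.
  - by rewrite mulr1 mulrC divfK // subrK.
  - by rewrite mulr0 addr0 mulrC divfK.
apply: ra_lb => p1' p2' q1' q2' /andP[a0 a1] /andP[b0 b1] /andP[c0 c1] /andP[e0 e1] hp hq.
have hq1 : q1' <= qs.
  rewrite /qs ler_pdivlMr // mulrC.
  have := mulr_ge0 d0 e0; lra.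
have hp1 : ps <= p1'.
  rewrite /ps ler_pdivrMr // mulrC.
  have : d * p2' <= d by rewrite -{2}(mulr1 d) ler_wpM2l.
  lra.
have qs0 : 0 <= qs by case/andP: bqs.
apply: le_trans (@RM2' al ps p1' qs h1 qs0 psqs hp1 a1) _.
apply: RM1' => //; lra.
Qed.

Lemma case3 (al d p q : R) : 1 < al -> 0 <= d -> d < 1 -> 0 <= p <= 1 -> 0 <= q <= 1 ->
  `|p - q| <= d -> renyi_approx al d (ber p) (ber q) = 0%E.
Proof.
move=> h1 d0 d1 /andP[p0 p1] /andP[q0 q1]; rewrite ler_norml => /andP[pq1 pq2].
apply/eqP; rewrite eq_le ra_ge0 // andbT.
have k0 : 0 < 1 - d by lra.
have kn : 1 - d != 0 by rewrite gt_eqF.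
have [e [e0 [e1 [e2 [e3 [e4 e5]]]]]] : exists e : R,
    0 <= e /\ e <= 1 - d /\ 0 <= p - e /\ p - e <= d /\ 0 <= q - e /\ q - e <= d.
  have [pq|qp] := leP p q.
    have [qd|dq] := leP q d; first by exists 0; repeat split; lra.
    by exists (q - d); repeat split; lra.
  have [pd|dp] := leP p d; first by exists 0; repeat split; lra.
  by exists (p - d); repeat split; lra.
have bc : 0 <= e / (1 - d) <= 1 by apply: div01.
have b2 : forall a, 0 <= a -> a <= d -> 0 <= a / d <= 1.
  move=> a a0 ad; have [dz|dn] := eqVneq d 0.
    by rewrite dz invr0 mulr0 lexx ler01.
  by apply: div01 => //; rewrite lt_def dn d0.
have eq : forall a, e <= a -> a - e <= d -> a = (1 - d) * (e / (1 - d)) + d * ((a - e) / d).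
  move=> a ea aed; rewrite (mulrC (1 - d)) divfK //.
  have [dz|dn] := eqVneq d 0; first by rewrite dz mul0r addr0; lra.
  by rewrite (mulrC d) divfK //; ring.
rewrite -(renyi_diag al bc).
apply: (@ra_ub al d p q _ ((p - e) / d) _ ((q - e) / d)) => //.
- exact: b2.
- exact: b2.
- by apply: eq; lra.
- by apply: eq; lra.
Qed.


Lemma nle (d a b : R) : 0 <= b - a <= d -> `|a - b| <= d.
Proof. by move=> /andP[h1 h2]; rewrite ler_norml; apply/andP; split; lra. Qed.

End S.

Theorem mainTheorem2 (R : realType) (alpha delta : R) :
  1 < alpha -> 0 <= delta -> delta < 1 ->
  (forall p q : R, 0 <= p <= 1 -> 0 <= q <= 1 ->
     (p < q - delta ->
        renyi_approx alpha delta (ber p) (ber q)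
        = renyi alpha (ber (p / (1 - delta))) (ber ((q - delta) / (1 - delta)))) /\
     (p > q + delta ->
        renyi_approx alpha delta (ber p) (ber q)
        = renyi alpha (ber ((p - delta) / (1 - delta))) (ber (q / (1 - delta)))) /\
     (`|p - q| <= delta -> renyi_approx alpha delta (ber p) (ber q) = 0%E)) /\
  (forall p q1 q2 : R, 0 <= p <= 1 ->
     (0 <= q1 -> q1 <= q2 -> q2 <= p ->
        (renyi_approx alpha delta (ber p) (ber q2)
         <= renyi_approx alpha delta (ber p) (ber q1))%E) /\
     (p <= q1 -> q1 <= q2 -> q2 <= 1 ->
        (renyi_approx alpha delta (ber p) (ber q1)
         <= renyi_approx alpha delta (ber p) (ber q2))%E)) /\
  (forall q p1 p2 : R, 0 <= q <= 1 ->
     (0 <= p1 -> p1 <= p2 -> p2 <= q ->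
        (renyi_approx alpha delta (ber p2) (ber q)
         <= renyi_approx alpha delta (ber p1) (ber q))%E) /\
     (q <= p1 -> p1 <= p2 -> p2 <= 1 ->
        (renyi_approx alpha delta (ber p1) (ber q)
         <= renyi_approx alpha delta (ber p2) (ber q))%E)).
Proof.
move=> h1 d0 d1.
have k0 : 0 < 1 - delta by lra.
have B : forall a b : R, a <= b -> 0 <= a <= 1 -> 0 <= b <= 1 -> True by [].
split; [|split].
- move=> p q hp hq; split; [exact: case1 | split; [exact: case2 | exact: case3]].
- move=> p q1 q2 /andP[p0 p1]; split.
  + move=> q10 q12 q2p.
    have hq2 : 0 <= q2 <= 1 by apply/andP; split; lra.
    have hq1 : 0 <= q1 <= 1 by apply/andP; split; lra.
    have hp : 0 <= p <= 1 by apply/andP.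
    have [h|h] := leP (p - q2) delta.
      rewrite case3 //; first exact: ra_ge0.
      by rewrite distrC; apply: nle; apply/andP; split; lra.
    have g2 : p > q2 + delta by lra.
    have g1 : p > q1 + delta by lra.
    rewrite (case2 h1 d0 d1 hp hq2 g2) (case2 h1 d0 d1 hp hq1 g1).
    apply: RM1' => //.
    * by rewrite divr_ge0 // ltW.
    * by apply: divle => //; lra.
    * by apply: divle => //; lra.
    * by rewrite ler_pdivrMr // mul1r; lra.
  + move=> pq1 q12 q21.
    have hq2 : 0 <= q2 <= 1 by apply/andP; split; lra.
    have hq1 : 0 <= q1 <= 1 by apply/andP; split; lra.
    have hp : 0 <= p <= 1 by apply/andP.
    have [h|h] := leP (q1 - p) delta.
      rewrite case3 //; first exact: ra_ge0.
      by apply: nle; apply/andP; split; lra.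
    have g2 : p < q2 - delta by lra.
    have g1 : p < q1 - delta by lra.
    rewrite (case1 h1 d0 d1 hp hq2 g2) (case1 h1 d0 d1 hp hq1 g1).
    apply: RM1 => //.
    * by rewrite divr_ge0 // ltW.
    * by apply: divle => //; lra.
    * by apply: divle => //; lra.
    * by rewrite ler_pdivrMr // mul1r; lra.
- move=> q p1 p2 /andP[q0 q1]; split.
  + move=> p10 p12 p2q.
    have hp2 : 0 <= p2 <= 1 by apply/andP; split; lra.
    have hp1 : 0 <= p1 <= 1 by apply/andP; split; lra.
    have hq : 0 <= q <= 1 by apply/andP.
    have [h|h] := leP (q - p2) delta.
      rewrite case3 //; first exact: ra_ge0.
      by apply: nle; apply/andP; split; lra.
    have g2 : p2 < q - delta by lra.
    have g1 : p1 < q - delta by lra.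
    rewrite (case1 h1 d0 d1 hp2 hq g2) (case1 h1 d0 d1 hp1 hq g1).
    apply: RM2 => //.
    * by rewrite divr_ge0 // ltW.
    * by apply: divle => //; lra.
    * by apply: divle => //; lra.
    * by rewrite ler_pdivrMr // mul1r; lra.
  + move=> qp1 p12 p21.
    have hp2 : 0 <= p2 <= 1 by apply/andP; split; lra.
    have hp1 : 0 <= p1 <= 1 by apply/andP; split; lra.
    have hq : 0 <= q <= 1 by apply/andP.
    have [h|h] := leP (p1 - q) delta.
      rewrite case3 //; first exact: ra_ge0.
      by rewrite distrC; apply: nle; apply/andP; split; lra.
    have g2 : p2 > q + delta by lra.
    have g1 : p1 > q + delta by lra.
    rewrite (case2 h1 d0 d1 hp2 hq g2) (case2 h1 d0 d1 hp1 hq g1).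
    apply: RM2' => //.
    * by rewrite divr_ge0 // ltW.
    * by apply: divle => //; lra.
    * by apply: divle => //; lra.
    * by rewrite ler_pdivrMr // mul1r; lra.
Qed.
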